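(* Let $N_b, N_g, L, M, P$ be positive integers. For $\ell=1,\dots,L$ let $\mathbf{L}_\ell\in\mathbb{R}^{2N_b\times 2N_b}$ be symmetric, $\mathbf{a}_\ell\in\mathbb{R}^{2N_g}$, $\mathbf{b}_\ell\in\mathbb{R}^{P}$; for $m=1,\dots,M$ let $\mathbf{M}_m\in\mathbb{R}^{2N_b\times 2N_b}$ be symmetric, $\mathbf{d}_m\in\mathbb{R}^P$, $f_m\in\mathbb{R}$; and let $\mathbf{a}_0\in\mathbb{R}^{2N_g}$. For a parameter $\boldsymbol{\theta}\in\mathbb{R}^P$ consider the parametric quadratically constrained quadratic program $$\min_{\mathbf{v}\in\mathbb{R}^{2N_b},\,\mathbf{x}_g\in\mathbb{R}^{2N_g}}\ \mathbf{a}_0^\top\mathbf{x}_g\quad\text{s.t.}\quad \mathbf{v}^\top\mathbf{L}_\ell\mathbf{v}=\mathbf{a}_\ell^\top\mathbf{x}_g+\mathbf{b}_\ell^\top\boldsymbol{\theta}\ (\ell=1,\dots,L),\qquad \mathbf{v}^\top\mathbf{M}_m\mathbf{v}\le \mathbf{d}_m^\top\boldsymbol{\theta}+f_m\ (m=1,\dots,M),$$ with multipliers $\lambda_\ell$ for the equality constraints and $\mu_m$ for the inequality constraints. Let $(\mathbf{v},\mathbf{x}_g,\boldsymbol{\lambda},\boldsymbol{\mu})$ be a tuple of (locally) optimal primal/dual variables for a given $\boldsymbol{\theta}$, satisfying the first-order optimality conditions: primal feasibility, $\mathbf{Z}\mathbf{v}=\mathbf{0}$ with $\mathbf{Z}:=\sum_{\ell=1}^L\lambda_\ell\mathbf{L}_\ell+\sum_{m=1}^M\mu_m\mathbf{M}_m$,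 $\mathbf{a}_0=\sum_{\ell=1}^L\lambda_\ell\mathbf{a}_\ell$, $\mu_m g_m=0$ and $\mu_m\ge 0$ for all $m$, where $g_m:=\mathbf{v}^\top\mathbf{M}_m\mathbf{v}-\mathbf{d}_m^\top\boldsymbol{\theta}-f_m$. Assume: (i) (strict complementarity) for every $m$, $g_m=0$ if and only if $\mu_m>0$; (ii) (second-order condition) with $\mathcal{A}:=\{m: g_m=0\}$, $\nabla_{\mathbf{x}}h_\ell:=\begin{bmatrix}2\mathbf{L}_\ell\mathbf{v}\\-\mathbf{a}_\ell\end{bmatrix}$, $\nabla_{\mathbf{x}}g_m:=\begin{bmatrix}2\mathbf{M}_m\mathbf{v}\\\mathbf{0}\end{bmatrix}$, $\nabla^2_{\mathbf{x}\mathbf{x}}\mathcal{L}:=\begin{bmatrix}\mathbf{Z}&\mathbf{0}\\\mathbf{0}&\mathbf{0}\end{bmatrix}$ and $\mathcal{Z}:=\{\mathbf{z}\in\mathbb{R}^{2N_b+2N_g}:\mathbf{z}^\top\nabla_{\mathbf{x}}h_\ell=0\ \forall\ell,\ \mathbf{z}^\top\nabla_{\mathbf{x}}g_m=0\ \forall m\in\mathcal{A}\}$, it holds that $\mathbf{z}^\top\nabla^2_{\mathbf{x}\mathbf{x}}\mathcal{L}\,\mathbf{z}>0$ for all $\mathbf{z}\in\mathcal{Z}\setminus\{\mathbf{0}\}$. Define the square matrix of size $2N_b+2N_g+L+M$ $$\mathbf{S}:=\begin{bmatrix}\mathbf{Z}&\mathbf{0}&\mathbf{L}_\lambda&\mathbf{M}_\mu\\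 \mathbf{0}&\mathbf{0}&\mathbf{A}^\top&\mathbf{0}\\ 2\mathbf{L}_\lambda^\top&-\mathbf{A}&\mathbf{0}&\mathbf{0}\\ 2\mathcal{D}(\boldsymbol{\mu})\mathbf{M}_\mu^\top&\mathbf{0}&\mathbf{0}&\mathcal{D}(\mathbf{g})\end{bmatrix},$$ where $\mathbf{L}_\lambda:=\sum_{\ell=1}^L\mathbf{L}_\ell\mathbf{v}\mathbf{e}_\ell^\top\in\mathbb{R}^{2N_b\times L}$, $\mathbf{M}_\mu:=\sum_{m=1}^M\mathbf{M}_m\mathbf{v}\mathbf{e}_m^\top\in\mathbb{R}^{2N_b\times M}$, $\mathbf{A}\in\mathbb{R}^{L\times 2N_g}$ is the matrix whose $\ell$-th row is $\mathbf{a}_\ell^\top$, $\mathbf{g}:=(g_1,\dots,g_M)$, and $\mathcal{D}(\cdot)$ denotes the diagonal matrix with the given vector on its diagonal. Then for every $\mathbf{n}\in\operatorname{null}(\mathbf{S})$, the entries $n_i$ for $i=1,\dots,2(N_b+N_g)$ are zero.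
   Context: This problem is an abstraction of the AC optimal power flow: $\mathbf{v}$ stacks real and imaginary parts of bus voltages, $\mathbf{x}_g$ stacks generator active/reactive power injections, and $\boldsymbol{\theta}$ stacks inflexible load demands. $\mathbf{e}_k$ denotes the $k$-th canonical basis vector of appropriate dimension. The conclusion means that the first $2(N_b+N_g)$ coordinates (those corresponding to $(\mathbf{v},\mathbf{x}_g)$) of any vector in the null space of $\mathbf{S}$ vanish, so that the primal sensitivities obtained from the linear system $\mathbf{S}\boldsymbol{\gamma}=\mathbf{u}$ are uniquely determined even when $\mathbf{S}$ is singular. *)

(* Defs.v *)
From mathcomp Require Import all_boot all_order all_algebra.
Set Implicit Arguments. Unset Strict Implicit. Unset Printing Implicit Defensive.
Import Order.TTheory GRing.Theory Num.Theory.
Local Open Scope ring_scope.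

Section QCQP.
Variables (R : realFieldType) (Nb Ng L M P : nat).
Variables (Lm : 'I_L -> 'M[R]_(2 * Nb)) (a : 'I_L -> 'cV[R]_(2 * Ng))
          (b : 'I_L -> 'cV[R]_P).
Variables (Mm : 'I_M -> 'M[R]_(2 * Nb)) (d : 'I_M -> 'cV[R]_P) (f : 'I_M -> R).
Variables (a0 : 'cV[R]_(2 * Ng)) (theta : 'cV[R]_P).

Definition bilin n (x : 'cV[R]_n) (A : 'M[R]_n) (y : 'cV[R]_n) : R :=
  (x^T *m A *m y) 0 0.
Definition dotv n (x y : 'cV[R]_n) : R := (x^T *m y) 0 0.

Definition hcon (l : 'I_L) (v : 'cV[R]_(2 * Nb)) (xg : 'cV[R]_(2 * Ng)) : R :=
  bilin v (Lm l) v - dotv (a l) xg - dotv (b l) theta.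
Definition gcon (m : 'I_M) (v : 'cV[R]_(2 * Nb)) : R :=
  bilin v (Mm m) v - dotv (d m) theta - f m.

Definition feasible v xg : Prop :=
  (forall l, hcon l v xg = 0) /\ (forall m, gcon m v <= 0).

Definition locally_optimal v xg : Prop :=
  feasible v xg /\
  exists eps : R, 0 < eps /\
    forall v' xg', feasible v' xg' ->
      (forall i, `|v' i 0 - v i 0| < eps) ->
      (forall j, `|xg' j 0 - xg j 0| < eps) ->
      dotv a0 xg <= dotv a0 xg'.

Definition Zmat (lam : 'I_L -> R) (mu : 'I_M -> R) : 'M[R]_(2 * Nb) :=
  \sum_(l < L) lam l *: Lm l + \sum_(m < M) mu m *: Mm m.

Definition KKT v xg (lam : 'I_L -> R) (mu : 'I_M -> R) : Prop :=
  [/\ feasible v xg,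
      Zmat lam mu *m v = 0,
      a0 = \sum_(l < L) lam l *: a l,
      forall m, mu m * gcon m v = 0 &
      forall m, 0 <= mu m].

Definition grad_h (l : 'I_L) (v : 'cV[R]_(2 * Nb)) : 'cV[R]_(2 * Nb + 2 * Ng) :=
  col_mx (2 *: (Lm l *m v)) (- a l).
Definition grad_g (m : 'I_M) (v : 'cV[R]_(2 * Nb)) : 'cV[R]_(2 * Nb + 2 * Ng) :=
  col_mx (2 *: (Mm m *m v)) 0.
Definition hessL (lam : 'I_L -> R) (mu : 'I_M -> R) : 'M[R]_(2 * Nb + 2 * Ng) :=
  block_mx (Zmat lam mu) 0 0 0.

Definition strict_compl v (mu : 'I_M -> R) : Prop :=
  forall m, gcon m v = 0 <-> 0 < mu m.

Definition SOSC v (lam : 'I_L -> R) (mu : 'I_M -> R) : Prop :=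
  forall z : 'cV[R]_(2 * Nb + 2 * Ng),
    (forall l, dotv z (grad_h l v) = 0) ->
    (forall m, gcon m v = 0 -> dotv z (grad_g m v) = 0) ->
    z != 0 -> 0 < bilin z (hessL lam mu) z.

Definition Llam (v : 'cV[R]_(2 * Nb)) : 'M[R]_(2 * Nb, L) :=
  \sum_(l < L) (Lm l *m v) *m (delta_mx l 0 : 'cV[R]_L)^T.
Definition Mmu (v : 'cV[R]_(2 * Nb)) : 'M[R]_(2 * Nb, M) :=
  \sum_(m < M) (Mm m *m v) *m (delta_mx m 0 : 'cV[R]_M)^T.
Definition Amat : 'M[R]_(L, 2 * Ng) := \matrix_(l < L, j < 2 * Ng) a l j 0.

Definition Smat v (lam : 'I_L -> R) (mu : 'I_M -> R)
  : 'M[R]_((2 * Nb + 2 * Ng) + (L + M)) :=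
  block_mx
    (block_mx (Zmat lam mu) 0 0 0)
    (block_mx (Llam v) (Mmu v) Amat^T 0)
    (block_mx (2 *: (Llam v)^T) (- Amat)
              (2 *: (diag_mx (\row_m mu m) *m (Mmu v)^T)) 0)
    (block_mx 0 0 0 (diag_mx (\row_m gcon m v))).
End QCQP.

(* Main.v *)
Require Import Defs.
From mathcomp Require Import all_boot all_order all_algebra.
Import Order.TTheory GRing.Theory Num.Theory.
Local Open Scope ring_scope.

Lemma trmul_col (R : comRingType) p q (X : 'M[R]_(p,q)) (x : 'cV[R]_p) (l : 'I_q) :
  (X^T *m x) l 0 = ((col l X)^T *m x) 0 0.
Proof. by rewrite !mxE; apply: eq_bigr => j _; rewrite !mxE. Qed.

Lemma col_Llam (R : realFieldType) Nb L (Lm : 'I_L -> 'M[R]_(2 * Nb)) v l :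
  col l (\sum_(l' < L) (Lm l' *m v) *m (delta_mx l' 0 : 'cV[R]_L)^T) = Lm l *m v.
Proof.
apply/matrixP => i j; rewrite !mxE summxE (bigD1 l) //=.
rewrite big1 ?addr0.
  by rewrite !mxE big_ord1 !mxE !eqxx mulr1 [j]ord1.
move=> k nk; rewrite !mxE big_ord1 !mxE eq_sym (negbTE nk) /= mulr0 //.
Qed.

Lemma mxDE (R : comRingType) p q (A B : 'M[R]_(p,q)) i j : (A + B) i j = A i j + B i j.
Proof. by rewrite mxE. Qed.
Lemma mxNE (R : comRingType) p q (A : 'M[R]_(p,q)) i j : (- A) i j = - A i j.
Proof. by rewrite mxE. Qed.
Lemma mxZE (R : comRingType) p q c (A : 'M[R]_(p,q)) i j : (c *: A) i j = c * A i j.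
Proof. by rewrite mxE. Qed.

Lemma dot_sym (R : comRingType) p (x y : 'cV[R]_p) :
  (x^T *m y) 0 0 = (y^T *m x) 0 0.
Proof. by rewrite -[in RHS](trmxK x) -trmx_mul [RHS]mxE. Qed.

Lemma col_Atr (R : realFieldType) Ng L (a : 'I_L -> 'cV[R]_(2 * Ng)) l :
  col l (Amat a)^T = a l.
Proof. by apply/matrixP => i j; rewrite !mxE [j]ord1. Qed.

Theorem theorem1 (R : realFieldType) (Nb Ng L M P : nat)
  (hNb : (0 < Nb)%N) (hNg : (0 < Ng)%N) (hL : (0 < L)%N) (hM : (0 < M)%N)
  (hP : (0 < P)%N)
  (Lm : 'I_L -> 'M[R]_(2 * Nb)) (a : 'I_L -> 'cV[R]_(2 * Ng))
  (b : 'I_L -> 'cV[R]_P)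
  (Mm : 'I_M -> 'M[R]_(2 * Nb)) (d : 'I_M -> 'cV[R]_P) (f : 'I_M -> R)
  (a0 : 'cV[R]_(2 * Ng)) (theta : 'cV[R]_P)
  (hLsym : forall l, (Lm l)^T = Lm l) (hMsym : forall m, (Mm m)^T = Mm m)
  (v : 'cV[R]_(2 * Nb)) (xg : 'cV[R]_(2 * Ng))
  (lam : 'I_L -> R) (mu : 'I_M -> R) :
  locally_optimal Lm a b Mm d f a0 theta v xg ->
  KKT Lm a b Mm d f a0 theta v xg lam mu ->
  strict_compl Mm d f theta v mu ->
  SOSC Lm a Mm d f theta v lam mu ->
  forall n : 'cV[R]_((2 * Nb + 2 * Ng) + (L + M)),
    Smat Lm a Mm d f theta v lam mu *m n = 0 ->
    forall i : 'I_((2 * Nb + 2 * Ng) + (L + M)),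
      (i < 2 * (Nb + Ng))%N -> n i 0 = 0.
Proof.
move=> _ [_ _ _ Hcg Hmu] Hsc Hsosc n Hn i hi.
set z := usubmx n; set w := dsubmx n.
have Hz : z = 0.
  move: Hn; rewrite -(vsubmxK n) -/z -/w /Smat.
  rewrite -(vsubmxK z) -(vsubmxK w).
  set n1 := usubmx z; set n2 := dsubmx z; set n3 := usubmx w; set n4 := dsubmx w.
  rewrite mul_block_col !mul_block_col.
  rewrite !mul0mx !addr0 !add0r.
  move/eqP; rewrite col_mx_eq0 => /andP[/eqP H1 /eqP H2].
  move/eqP: H1; rewrite add_col_mx col_mx_eq0 add0r => /andP[/eqP E1 /eqP E2].
  move/eqP: H2; rewrite add_col_mx col_mx_eq0 addr0 => /andP[/eqP E3 /eqP E4].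
  have E3' : 2 *: ((Llam Lm v)^T *m n1) = Amat a *m n2.
    by move: E3; rewrite -scalemxAl mulNmx => /eqP; rewrite addr_eq0 opprK => /eqP.
  have F1 l : ((Llam Lm v)^T *m n1) l 0 = ((Lm l *m v)^T *m n1) 0 0.
    by rewrite trmul_col col_Llam.
  have F2 l : (Amat a *m n2) l 0 = ((a l)^T *m n2) 0 0.
    by rewrite -[Amat a]trmxK trmul_col col_Atr.
  have F3 m : ((Mmu Mm v)^T *m n1) m 0 = ((Mm m *m v)^T *m n1) 0 0.
    by rewrite trmul_col col_Llam.
  have Hzc : z = col_mx n1 n2 by rewrite vsubmxK.
  clearbody n1 n2 n3 n4.
  rewrite -scalemxAl -mulmxA !mul_diag_mx in E4.
  have E4' m : 2 * (mu m * ((Mmu Mm v)^T *m n1) m 0) + gcon Mm d f theta m v * n4 m 0 = 0.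
    move: E4 => /(congr1 (fun X : 'cV[R]_M => X m 0)).
    set u := (Mmu Mm v)^T *m n1; clearbody u.
    by rewrite !mxE.
  have two0 : (2 : R) != 0 by rewrite pnatr_eq0.
  have Hact m : gcon Mm d f theta m v = 0 -> ((Mmu Mm v)^T *m n1) m 0 = 0.
    move=> hg; have hmu : 0 < mu m by apply/Hsc.
    move: (E4' m); rewrite hg mul0r addr0 => /eqP.
    by rewrite !mulf_eq0 (negbTE two0) (gt_eqF hmu) /= => /eqP.
  have Hu m : ((Mmu Mm v)^T *m n1) m 0 * n4 m 0 = 0.
    case: (eqVneq (gcon Mm d f theta m v) 0) => hg; first by rewrite Hact // mul0r.
    have hmu : mu m = 0.
      by move/eqP: (Hcg m); rewrite mulf_eq0 (negbTE hg) orbF => /eqP.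
    move: (E4' m); rewrite hmu mul0r mulr0 add0r => /eqP.
    by rewrite mulf_eq0 (negbTE hg) /= => /eqP ->; rewrite mulr0.
  have Hh l : dotv z (grad_h Lm a l v) = 0.
    rewrite /dotv /grad_h Hzc tr_col_mx mul_row_col -scalemxAr mulmxN.
    rewrite mxDE mxNE mxZE (@dot_sym _ _ n1) (@dot_sym _ _ n2) -F1 -F2.
    have := congr1 (fun X : 'cV[R]_L => X l 0) E3'; rewrite /= mxZE => ->.
    by rewrite subrr.
  have Hg m : gcon Mm d f theta m v = 0 -> dotv z (grad_g Ng Mm m v) = 0.
    move=> hg; rewrite /dotv /grad_g Hzc tr_col_mx mul_row_col mulmx0 addr0 -scalemxAr.
    by rewrite mxZE (@dot_sym _ _ n1) -F3 Hact // mulr0.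
  have Hbil : bilin z (hessL Ng Lm Mm lam mu) z = 0.
    rewrite /bilin /hessL Hzc tr_col_mx mul_row_block !mulmx0 !addr0 mul_row_col mul0mx addr0.
    have EZ : Zmat Lm Mm lam mu *m n1 = - (Llam Lm v *m n3 + Mmu Mm v *m n4).
      by apply/eqP; rewrite -addr_eq0; apply/eqP.
    have L0 : n1^T *m (Llam Lm v *m n3) = 0.
      rewrite mulmxA -[Llam Lm v]trmxK -trmx_mul.
      have -> : (Llam Lm v)^T *m n1 = 2^-1 *: (Amat a *m n2).
        by rewrite -E3' scalerA mulVf // scale1r.
      by rewrite linearZ /= -scalemxAl trmx_mul -mulmxA E2 mulmx0 scaler0.
    have M0 : (n1^T *m (Mmu Mm v *m n4)) 0 0 = 0.
      rewrite mulmxA -[Mmu Mm v]trmxK -trmx_mul mxE; apply: big1 => m _.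
      by rewrite mxE; exact: Hu.
    by rewrite -mulmxA EZ mulmxN mulmxDr L0 add0r mxNE M0 oppr0.
  rewrite -Hzc; case: (eqVneq z 0) => // nz.
  by have := Hsosc z Hh Hg nz; rewrite Hbil ltxx.
have hi' : (i < 2 * Nb + 2 * Ng)%N by move: hi; rewrite mulnDr.
have -> : i = lshift (L + M) (Ordinal hi') by apply: val_inj.
by rewrite -(vsubmxK n) col_mxEu -/z Hz mxE.
Qed.
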